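(* Let $H$ be a strictly $2$-balanced graph with $h$ vertices and $k$ edges. For $n\ge h$ let $G^H$ be the $k$-uniform hypergraph whose vertex set is the edge set of $K_n$ and whose hyperedges are the $k$-sets of edges of $K_n$ forming a copy of $H$. Let $\Delta=\frac{2k\,(n-2)_{h-2}}{|\mathrm{Aut}(H)|}$. Then (1) $G^H$ is $\Delta$-regular; (2) for each $\ell\in\{2,\dots,k-1\}$, $\Delta_\ell(G^H)=o\left(\Delta^{\frac{k-\ell}{k-1}}\right)$ as $n\to\infty$; (3) $\Gamma(G^H)=o(\Delta)$.
   Context: $m_2(H)=\max_{F\subseteq H,|V(F)|\ge3}\frac{|E(F)|-1}{|V(F)|-2}$; $H$ (with $|E(H)|\ge3$) is strictly $2$-balanced if the maximum is attained uniquely at $F=H$. $(n)_j=n(n-1)\cdots(n-j+1)$. For a hypergraph $G$, $\Delta_\ell(G)=\max_{|S|=\ell}|\{e\in E(G):S\subseteq e\}|$, and $\Gamma(G)$ is the maximum over distinct vertices $v,v'$ of the number of $(k-1)$-sets $S$ of vertices with $S\cup\{v\}$ and $S\cup\{v'\}$ both hyperedges. *)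

(* Defs.v *)
From Stdlib Require Import Reals.
From mathcomp Require Import all_boot all_order all_algebra all_fingroup.
Set Implicit Arguments. Unset Strict Implicit. Unset Printing Implicit Defensive.

Section GH.
Variables (V : finType) (E : {set {set V}}).

(* A graph H: vertex set V (h = #|V|), edge set E of 2-subsets (k = #|E|). *)
Definition is_graph : Prop := forall e, e \in E -> #|e| = 2.

Definition dens2 (W : {set V}) (D : {set {set V}}) : rat :=
  ((#|D|%:Q - 1) / (#|W|%:Q - 2))%R.

Definition strictly_2_balanced : Prop :=
  3 <= #|E| /\
  forall (W : {set V}) (D : {set {set V}}),
    D \subset E -> (forall e, e \in D -> e \subset W) -> 3 <= #|W| ->
    (W, D) <> (setT, E) -> (dens2 W D < dens2 setT E)%R.

Definition aut_card : nat := #|[set s : {perm V} | [set s @: e | e : {set V} in E] == E]|.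

Definition Kedges (n : nat) : {set {set 'I_n}} := [set e : {set 'I_n} | #|e| == 2].

Definition GH_edges (n : nat) : {set {set {set 'I_n}}} :=
  [set S | [exists f : {ffun V -> 'I_n}, injectiveb f && (S == [set f @: e | e : {set V} in E])]].

Definition GH_deg (n : nat) (x : {set 'I_n}) : nat := #|[set S in GH_edges n | x \in S]|.

Definition GH_maxdeg (l n : nat) : nat :=
  \max_(S in [set S : {set {set 'I_n}} | (S \subset Kedges n) && (#|S| == l)])
     #|[set T in GH_edges n | S \subset T]|.

Definition GH_Gamma (n : nat) : nat :=
  \max_(p : {set 'I_n} * {set 'I_n} |
          [&& p.1 \in Kedges n, p.2 \in Kedges n & p.1 != p.2])
     #|[set S : {set {set 'I_n}} |
          [&& S \subset Kedges n, #|S| == #|E|.-1,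
              (S :|: [set p.1]) \in GH_edges n & (S :|: [set p.2]) \in GH_edges n]]|.

Definition GH_Delta (n : nat) : R :=
  Rdiv (INR (2 * #|E| * (n - 2) ^_ (#|V| - 2))) (INR aut_card).

End GH.

Definition little_o (f g : nat -> R) : Prop :=
  forall eps : R, Rlt 0 eps -> exists N : nat, forall n : nat, (N <= n)%N ->
    Rle (Rabs (f n)) (Rmult eps (Rabs (g n))).

(* Main.v *)
Require Import Defs.
From Stdlib Require Import Reals Lra.
From mathcomp Require Import all_boot all_order all_algebra all_fingroup.
From mathcomp Require Import zify.

Module Helpers.
Set Implicit Arguments. Unset Strict Implicit. Unset Printing Implicit Defensive.
Import Order.TTheory GRing.Theory Num.Theory.

Lemma two_sets_union (T : finType) (e1 e2 : {set T}) :
  #|e1| = 2 -> #|e2| = 2 -> e1 != e2 -> 3 <= #|e1 :|: e2| <= 4.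
Proof.
move=> h1 h2 ne; rewrite cardsU h1 h2.
have : #|e1 :&: e2| <= 1.
  rewrite leqNgt; apply/negP => H.
  have E1 : e1 :&: e2 = e1.
    apply/eqP; rewrite eqEcard subsetIl h1; exact: H.
  have E2 : e1 :&: e2 = e2.
    apply/eqP; rewrite eqEcard subsetIr h2; exact: H.
  by move/negP: ne; apply; rewrite -E1 E2.
lia.
Qed.

Lemma two_sets_share (T : finType) (e1 e2 : {set T}) :
  #|e1| = 2 -> #|e2| = 2 -> (e1 :&: e2 != set0) -> #|e1 :|: e2| <= 3.
Proof.
move=> h1 h2 ne; rewrite cardsU h1 h2.
have : 0 < #|e1 :&: e2| by rewrite card_gt0.
lia.
Qed.

Lemma dens_lt (d w k h : nat) : 1 <= d -> 3 <= w -> 3 <= h -> 1 <= k ->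
  (((d%:Q - 1) / (w%:Q - 2)) < ((k%:Q - 1)/(h%:Q - 2)))%R ->
  (d-1)*(h-2) < (k-1)*(w-2).
Proof.
move=> hd hw hh hk.
rewrite -!pmulrn.
have -> : (d%:R - 1 = (d - 1)%N%:R :> rat)%R by rewrite natrB.
have -> : (k%:R - 1 = (k - 1)%N%:R :> rat)%R by rewrite natrB.
have -> : (w%:R - 2 = (w - 2)%N%:R :> rat)%R by rewrite natrB //; apply: leq_trans hw.
have -> : (h%:R - 2 = (h - 2)%N%:R :> rat)%R by rewrite natrB //; apply: leq_trans hh.
have w0 : (0 < (w - 2)%N%:R :> rat)%R by rewrite ltr0n; lia.
have h0 : (0 < (h - 2)%N%:R :> rat)%R by rewrite ltr0n; lia.
rewrite ltr_pdivrMr // mulrAC ltr_pdivlMr // -!natrM ltr_nat.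
by rewrite mulnC [X in _ < X]mulnC.
Qed.

Section Graph.
Variables (V : finType) (E : {set {set V}}).
Hypothesis G : is_graph E.
Hypothesis B : strictly_2_balanced E.

Lemma k3 : 3 <= #|E|.
Proof. exact: B.1. Qed.

Lemma cover_ge3 (W : {set V}) (D : {set {set V}}) : D \subset E -> 1 < #|D| ->
  (forall e, e \in D -> e \subset W) -> 3 <= #|W|.
Proof.
move=> sDE /card_gt1P [e1 [e2 [i1 i2 ne]]] hW.
have := two_sets_union (G (subsetP sDE _ i1)) (G (subsetP sDE _ i2)) ne.
move=> /andP [H _]; apply: leq_trans H _; apply: subset_leq_card.
by rewrite subUset !hW.
Qed.

Lemma h3 : 3 <= #|V|.
Proof.
rewrite -cardsT; apply: (@cover_ge3 _ E) => //;
  try (by have := k3; lia); try (by move=> e _; apply: subsetT).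
Qed.

Lemma apply_B (W : {set V}) (D : {set {set V}}) : D \subset E ->
  (forall e, e \in D -> e \subset W) -> 3 <= #|W| -> (W,D) <> (setT,E) ->
  1 <= #|D| -> (#|D| -1)*(#|V| -2) < (#|E| -1)*(#|W| -2).
Proof.
move=> sDE hW w3 ne d1.
have := B.2 W D sDE hW w3 ne; rewrite /dens2 cardsT => H.
apply: dens_lt => //; [exact: h3 | have := k3; lia].
Qed.

Lemma pair_bound (e1 e2 : {set V}) : e1 \in E -> e2 \in E -> e1 != e2 ->
  #|V| - 2 < (#|E| -1)*(#|e1 :|: e2| -2).
Proof.
move=> i1 i2 ne.
have c2 : #|[set e1; e2]| = 2 by rewrite cards2 ne.
suff H : (#|[set e1; e2]| - 1) * (#|V| - 2) < (#|E| - 1) * (#|e1 :|: e2| - 2)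
  by rewrite c2 mul1n in H.
apply: apply_B.
- by apply/subsetP => e; rewrite !inE => /orP [] /eqP ->.
- by move=> e; rewrite !inE => /orP [] /eqP ->; [apply: subsetUl | apply: subsetUr].
- by have /andP[] := two_sets_union (G i1) (G i2) ne.
- by case=> _ HE; have := k3; rewrite -HE c2.
- by rewrite c2.
Qed.

Lemma no_isolated v : exists2 e, e \in E & v \in e.
Proof.
have [/existsP [e /andP [eE ve]] | H] := boolP [exists e, (e \in E) && (v \in e)].
  by exists e.
exfalso; move: H; rewrite negb_exists => /forallP H.
have hW : forall e, e \in E -> e \subset [set~ v].
  move=> e eE; apply/subsetP => w we; rewrite !inE; apply/eqP => wv.
  by move: (H e); rewrite eE -wv we.
have w3 : 3 <= #|[set~ v]| by apply: (@cover_ge3 _ E) => //; have := k3; lia.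
have := @apply_B [set~ v] E (subxx _) hW w3.
rewrite cardsC1.
have ne : ([set~ v], E) <> (setT, E).
  case=> /setP /(_ v); rewrite !inE eqxx //.
move=> /(_ ne); have := k3; have := h3; rewrite cardsC1 in w3.
move=> a b c; have := c (leq_trans _ b) => //; nia.
Qed.

Lemma deg2 v e0 : e0 \in E -> v \in e0 -> exists2 e', e' \in E & (e' != e0) && (v \in e').
Proof.
move=> e0E ve0.
have [/existsP [e /andP [/andP [eE ne] ve]] | H] := boolP [exists e, (e \in E) && (e != e0) && (v \in e)].
  by exists e => //; rewrite ne ve.
exfalso; move: H; rewrite negb_exists => /forallP H.
have Hv : forall e, e \in E -> e != e0 -> v \notin e.
  by move=> e eE ne; apply/negP => ve; move: (H e); rewrite eE ne ve.
have kk := k3; have hh := h3.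
have cD : #|E :\ e0| = #|E| - 1 by rewrite (cardsD1 e0 E) e0E; lia.
have sD : E :\ e0 \subset E by apply: subD1set.
have [/existsP [e1 /andP [/andP [e1E ne1] ie1]] | H2] :=
  boolP [exists e1, (e1 \in E) && (e1 != e0) && (e0 :&: e1 != set0)].
- have hW : forall e, e \in E :\ e0 -> e \subset [set~ v].
    move=> e; rewrite !inE => /andP [ne eE]; apply/subsetP => w we; rewrite !inE.
    by apply/eqP => wv; move: (Hv e eE ne); rewrite -wv we.
  have w3 : 3 <= #|[set~ v]| by apply: (@cover_ge3 _ (E :\ e0)) => //; lia.
  have := @apply_B [set~ v] (E :\ e0) sD hW w3.
  have ne : ([set~ v], E :\ e0) <> (setT, E).
    case=> /setP /(_ v); rewrite !inE eqxx //.
  move=> /(_ ne); rewrite cD cardsC1 => /(_ ltac:(lia)) A1.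
  have P1 := pair_bound e0E e1E (ltac:(by rewrite eq_sym)) .
  have := two_sets_share (G e0E) (G e1E) ie1.
  move: P1; nia.
- move: H2; rewrite negb_exists => /forallP H2.
  have hW : forall e, e \in E :\ e0 -> e \subset ~: e0.
    move=> e; rewrite !inE => /andP [ne eE]; apply/subsetP => w we; rewrite !inE.
    apply/negP => we0; move: (H2 e); rewrite eE ne /= => /negP; apply.
    by apply/set0Pn; exists w; rewrite inE we0 we.
  have cW : #|~: e0| = #|V| - 2 by rewrite cardsCs setCK (G e0E).
  have d2 : 1 < #|E :\ e0| by lia.
  have w3 : 3 <= #|~: e0| by apply: (@cover_ge3 _ (E :\ e0)).
  have := @apply_B (~: e0) (E :\ e0) sD hW w3.
  have ne : (~: e0, E :\ e0) <> (setT, E).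
    by case=> _ /setP /(_ e0); rewrite !inE eqxx e0E.
  move=> /(_ ne); rewrite cD cW => /(_ ltac:(lia)) A1.
  move: d2 => /card_gt1P [e1 [e2 [i1 i2 n12]]].
  move: i1 i2; rewrite !inE => /andP [_ e1E] /andP [_ e2E].
  have P1 := pair_bound e1E e2E n12.
  have := two_sets_union (G e1E) (G e2E) n12.
  move: P1; nia.
Qed.
End Graph.


Section Count.
Variables (V : finType) (n : nat).
Local Notation FF := {ffun V -> 'I_n}.

Definition compf (s : {perm 'I_n}) (f : FF) : FF := [ffun w => s (f w)].

Lemma compf_inj s : injective (compf s).
Proof.
move=> f g /ffunP H; apply/ffunP => w; move: (H w); rewrite !ffunE; exact: perm_inj.
Qed.

Lemma compf_injb s f : injectiveb (compf s f) = injectiveb f.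
Proof.
apply/injectiveP/injectiveP => H x y.
- by move=> fxy; apply: H; rewrite !ffunE fxy.
- by rewrite !ffunE => /perm_inj /H.
Qed.

Lemma card_le_perm (A B : {set FF}) s :
  (forall f, f \in A -> compf s f \in B) -> #|A| <= #|B|.
Proof.
move=> H; rewrite -(card_imset _ (@compf_inj s)); apply: subset_leq_card.
by apply/subsetP => g /imsetP [f fA ->]; apply: H.
Qed.

Variables (u v : V).
Hypothesis uv : u != v.

Definition G1 a := [set f : FF | injectiveb f && (f u == a)].
Definition G2 a b := [set f : FF | injectiveb f && (f u == a) && (f v == b)].

Lemma G1_le a a' : #|G1 a| <= #|G1 a'|.
Proof.
apply: (@card_le_perm _ _ (tperm a a')) => f; rewrite /G1 /G2 !inE compf_injb ffunE.
case/andP => fi /eqP fu. rewrite fi fu tpermL eqxx. done.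
Qed.

Lemma card_G1 a : #|G1 a| = n.-1 ^_ #|V|.-1.
Proof.
have a0 : 0 < n by case: a => a /=; lia.
have S : \sum_(a' : 'I_n) #|G1 a'| = #|[set f : FF | injectiveb f]|.
  rewrite -sum1_card.
  rewrite (partition_big (fun f : FF => f u) predT) //.
  by apply: eq_bigr => a' _; rewrite -sum1_card; apply: eq_bigl => f; rewrite /G1 !inE.
rewrite card_inj_ffuns card_ord in S.
have S2 : \sum_(a' : 'I_n) #|G1 a'| = n * #|G1 a|.
  rewrite (eq_bigr (fun _ => #|G1 a|)) ?sum_nat_const ?card_ord // => a' _.
  by apply/eqP; rewrite eqn_leq !G1_le.
have hV : 0 < #|V| by apply/card_gt0P; exists u.
move: S; rewrite S2; case: #|V| hV => // m _; rewrite ffactnS /= => /eqP.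
by rewrite eqn_pmul2l // => /eqP.
Qed.

Lemma G2_le a b b' : b != a -> b' != a -> #|G2 a b| <= #|G2 a b'|.
Proof.
move=> ba b'a.
apply: (@card_le_perm _ _ (tperm b b')) => f; rewrite /G1 /G2 !inE compf_injb !ffunE.
case/andP => /andP [fi /eqP fu] /eqP fv; rewrite fi fu fv tpermL tpermD ?eqxx //.
Qed.

Lemma card_G2 a b : b != a -> #|G2 a b| = n.-2 ^_ #|V|.-2.
Proof.
move=> ba.
have S : \sum_(b' : 'I_n) #|G2 a b'| = #|G1 a|.
  rewrite -sum1_card (partition_big (fun f : FF => f v) predT) //.
  by apply: eq_bigr => b' _; rewrite -sum1_card; apply: eq_bigl => f; rewrite /G1 /G2 !inE.
have G2aa : #|G2 a a| = 0.
  apply/eqP; rewrite cards_eq0; apply/eqP/setP => f; rewrite !inE.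
  apply/negP => /andP [/andP [/injectiveP fi /eqP fu] /eqP fv].
  by move: uv; rewrite (fi u v) ?eqxx // fu fv.
rewrite (bigD1 a) //= G2aa add0n in S.
have S2 : \sum_(b' | b' != a) #|G2 a b'| = n.-1 * #|G2 a b|.
  rewrite (eq_bigr (fun _ => #|G2 a b|)) ?sum_nat_const ?cardC1 ?card_ord // => b' b'a.
  by apply/eqP; rewrite eqn_leq !G2_le.
rewrite S2 card_G1 in S.
have n2 : 1 < n.
  rewrite -[n]card_ord; apply/card_gt1P; exists a, b; split => //; by rewrite eq_sym.
have hV : 1 < #|V|.
  apply/card_gt1P; exists u, v; done.
move: S; case: #|V| hV => // [[|m]] // _ /=; rewrite ffactnS /= => /eqP.
rewrite eqn_pmul2l; last lia.
by move/eqP.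
Qed.
End Count.


Lemma set2_eq (T : finType) (p q a b : T) : a != b ->
  ([set p; q] == [set a; b]) = ((p == a) && (q == b)) || ((p == b) && (q == a)).
Proof.
move=> ab; apply/idP/idP.
- move/eqP/setP => H; have := H p; have := H q; have := H a; have := H b.
  rewrite !inE !eqxx /= ?orbT.
  move=> H1 H2 _ /esym H4.
  case/orP: H4 => /eqP pE; subst p.
  + case/orP: H1 => [/eqP ba|/eqP bq]; [by rewrite ba eqxx in ab | by rewrite bq !eqxx].
  + case/orP: H2 => [/eqP ab'|/eqP aq]; [by rewrite ab' eqxx in ab | by rewrite aq !eqxx orbT].
- case/orP => /andP [/eqP -> /eqP ->] //; by rewrite setUC.
Qed.

Section P1.
Variables (V : finType) (E : {set {set V}}) (n : nat).
Local Notation FF := {ffun V -> 'I_n}.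

Lemma card_Fe (e : {set V}) (x : {set 'I_n}) : #|e| = 2 -> #|x| = 2 ->
  #|[set f : FF | injectiveb f && (f @: e == x)]| = 2 * n.-2 ^_ #|V|.-2.
Proof.
move=> /eqP /cards2P [u [v [uv ->]]] /eqP /cards2P [a [b [ab ->]]].
have -> : [set f : FF | injectiveb f && (f @: [set u; v] == [set a; b])] =
          G2 u v a b :|: G2 u v b a.
  apply/setP => f; rewrite /G2 !inE imsetU1 imset_set1 set2_eq //.
  by case: (injectiveb f); rewrite /= ?andbA.
rewrite cardsU.
have -> : G2 u v a b :&: G2 u v b a = set0.
  apply/setP => f; rewrite /G2 !inE.
  apply/negP => /andP [/andP [/andP [_ /eqP fa] _] /andP [/andP [_ /eqP fb] _]].
  by move: ab; rewrite -fa fb eqxx.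
rewrite cards0 subn0 !card_G2 //; first lia.
by rewrite eq_sym.
Qed.

Lemma card_sumb (T : finType) (A : {pred T}) : #|A| = \sum_i (i \in A : nat).
Proof. by rewrite -sum1_card big_mkcond /=; apply: eq_bigr => i _; case: (i \in A). Qed.

Lemma card_Fx (x : {set 'I_n}) : is_graph E -> #|x| = 2 ->
  #|[set f : FF | injectiveb f && (x \in [set f @: e | e : {set V} in E])]|
  = #|E| * (2 * n.-2 ^_ #|V|.-2).
Proof.
move=> G x2.
transitivity (\sum_(e in E) #|[set f : FF | injectiveb f && (f @: e == x)]|); last first.
  by rewrite (eq_bigr (fun _ => 2 * n.-2 ^_ #|V|.-2)) ?sum_nat_const // => e eE; apply: card_Fe => //; apply: G.
transitivity (\sum_(e in E) \sum_(f : FF) (f \in [set f : FF | injectiveb f && (f @: e == x)] : nat));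
  last by apply: eq_bigr => e _; rewrite card_sumb.
rewrite card_sumb exchange_big /=; apply: eq_bigr => f _; rewrite inE.
case: (injectiveP f) => fi /=; last first.
  by rewrite big1 // => e _; rewrite inE; move/injectiveP/negbTE: fi => ->.
case: (boolP (x \in _)) => [/imsetP [e0 e0E ->] | nx].
- have fb : injectiveb f by apply/injectiveP.
  rewrite (bigD1 e0) //= inE eqxx fb /= big1 // => e /andP [eE ne].
  by rewrite inE (inj_eq (imset_inj fi)) (negbTE ne) andbF.
- rewrite big1 // => e eE; rewrite inE; case: eqP; rewrite ?andbF // => fe.
  by exfalso; move/negP: nx; apply; rewrite -fe; apply/imsetP; exists e.
Qed.

Lemma fiber (f0 : FF) : injective f0 -> (forall w, exists2 e, e \in E & w \in e) ->
  #|[set f : FF | injectiveb f &&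
      ([set f @: e | e : {set V} in E] == [set f0 @: e | e : {set V} in E])]|
  = aut_card E.
Proof.
move=> f0i cov.
pose mk := fun s : {perm V} => [ffun w => f0 (s w)] : FF.
have mki : injective mk.
  move=> s t /ffunP H; apply/permP => w; apply: f0i; move: (H w); by rewrite !ffunE.
rewrite /aut_card -(card_imset _ mki); apply: eq_card => f; rewrite inE.
apply/idP/imsetP.
- move=> /andP [/injectiveP fi /eqP cf].
  have ex : forall w, exists w', f0 w' = f w.
    move=> w; have [e eE we] := cov w.
    have : f @: e \in [set f0 @: e | e : {set V} in E] by rewrite -cf; apply: imset_f.
    case/imsetP => e' e'E fe.
    have : f w \in f @: e by apply: imset_f.
    by rewrite fe => /imsetP [w' _ ->]; exists w'.
  pose s0 := fun w => odflt w [pick w' | f0 w' == f w].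
  have s0E : forall w, f0 (s0 w) = f w.
    move=> w; rewrite /s0; case: pickP => [w' /eqP //| H].
    by have [w' ew'] := ex w; move: (H w'); rewrite ew' eqxx.
  have s0i : injective s0 by move=> a b eab; apply: fi; rewrite -!s0E eab.
  exists (perm s0i); last by apply/ffunP => w; rewrite !ffunE permE s0E.
  rewrite inE; apply/eqP.
  have sub : [set (perm s0i) @: e | e : {set V} in E] \subset E.
    apply/subsetP => _ /imsetP [e eE ->].
    have fe : f0 @: ((perm s0i) @: e) = f @: e.
      by rewrite -imset_comp; apply: eq_imset => w; rewrite /= permE s0E.
    have : f @: e \in [set f0 @: e | e : {set V} in E] by rewrite -cf; apply: imset_f.
    case/imsetP => e' e'E fe'.
    by rewrite -fe in fe'; rewrite (imset_inj f0i fe').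
  apply/eqP; rewrite eqEcard sub card_imset ?leqnn //; exact: (imset_inj (@perm_inj _ _)).
- case=> s; rewrite inE => /eqP sE ->.
  have mkE : forall e : {set V}, (mk s) @: e = f0 @: (s @: e).
    move=> e; apply/setP => y; apply/imsetP/imsetP => [[w we ->]|[z /imsetP [w we ->] ->]].
      by exists (s w); [apply: imset_f | rewrite ffunE].
    by exists w => //; rewrite ffunE.
  apply/andP; split.
    by apply/injectiveP => a b; rewrite !ffunE => /f0i /perm_inj.
  rewrite (eq_imset _ mkE) (imset_comp (fun e : {set V} => f0 @: e) (fun e : {set V} => s @: e)) sE.
  by [].
Qed.

Lemma deg_aut (x : {set 'I_n}) : is_graph E -> (forall w, exists2 e, e \in E & w \in e) ->
  #|x| = 2 -> GH_deg E x * aut_card E = #|E| * (2 * n.-2 ^_ #|V|.-2).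
Proof.
move=> G cov x2; rewrite -(card_Fx G x2) -sum1_card.
pose cp := fun f : FF => [set f @: e | e : {set V} in E].
rewrite (partition_big_imset cp).
have -> : [set cp f | f in [set f : FF | injectiveb f && (x \in [set f @: e | e : {set V} in E])]]
   = [set S in GH_edges E n | x \in S].
  apply/setP => S; rewrite /GH_edges !inE; apply/imsetP/andP.
  - case=> f; rewrite inE => /andP [fi xf] ->; split => //.
    by apply/existsP; exists f; rewrite fi eqxx.
  - case=> /existsP [f /andP [fi /eqP ->]] xS; exists f => //; by rewrite inE fi.
rewrite /GH_deg -sum_nat_const; apply: eq_bigr => S; rewrite /GH_edges !inE => /andP [/existsP [f0 /andP [f0i /eqP ->]] xS].
rewrite sum1_card -(fiber (f0 := f0)) //; last by apply/injectiveP.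
apply: eq_card => f; rewrite [in RHS]unfold_in /= !inE /cp; case: (injectiveb f) => //=.
case: (boolP (_ == _)) => [/eqP e|_]; rewrite ?andbF // e xS. by [].
Qed.
End P1.


Section Bound.
Variables (V : finType) (n : nat).
Local Notation FF := {ffun V -> 'I_n}.

Lemma card_fam (W : {set V}) (U : {set 'I_n}) :
  #|[set f : FF | [forall w, (w \in W) ==> (f w \in U)]]| = #|U| ^ #|W| * n ^ (#|V| - #|W|).
Proof.
pose F := fun w : V => [pred y : 'I_n | (w \in W) ==> (y \in U)].
have -> : #|[set f : FF | [forall w, (w \in W) ==> (f w \in U)]]| = foldr muln 1 [seq #|F x| | x : V].
  rewrite -card_family; apply: eq_card => f; rewrite inE; apply/forallP/familyP => H x; move: (H x); by rewrite !inE.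
rewrite foldrE big_map big_enum /=.
rewrite (bigID (mem W)) /=.
rewrite (eq_bigr (fun _ => #|U|)); last first.
  by move=> x xW; apply: eq_card => y; rewrite !inE xW.
rewrite [X in _ * X](eq_bigr (fun _ => n)); last first.
  by move=> x xW; rewrite -[n in RHS]card_ord; apply: eq_card => y; rewrite !inE (negbTE xW).
rewrite !prod_nat_const; congr (_ * _); congr (_ ^ _).
by rewrite -(cardsC W) addKn; apply: eq_card => x; rewrite !inE.
Qed.

Lemma card_setV : #|{: {set V}}| = 2 ^ #|V|.
Proof.
rewrite -cardsT -card_powerset; apply: eq_card => B; rewrite !inE. by rewrite subsetT.

Qed.

Lemma count_pre (U : {set 'I_n}) (m : nat) : 0 < n ->
  #|[set f : FF | m <= #|[set w | f w \in U]|]|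
  <= 2 ^ #|V| * ((#|U|.+1) ^ #|V| * n ^ (#|V| - m)).
Proof.
move=> n0.
pose Fam := fun W : {set V} => [set f : FF | [forall w, (w \in W) ==> (f w \in U)]].
apply: (@leq_trans (\sum_(W : {set V} | m <= #|W|) #|Fam W|)).
  rewrite card_sumb.
  apply: (@leq_trans (\sum_(f : FF) \sum_(W : {set V} | m <= #|W|) (f \in Fam W : nat))); last first.
    rewrite exchange_big /=; apply: leq_sum => W _; by rewrite card_sumb.
  apply: leq_sum => f _; rewrite inE.
  case: (boolP (m <= _)) => // mW.
  rewrite (bigD1 [set w | f w \in U]) //= inE.
  have -> : [forall w, (w \in [set w | f w \in U]) ==> (f w \in U)].
    by apply/forallP => w; rewrite inE; apply/implyP.
  by [].
apply: (@leq_trans (\sum_(W : {set V}) (#|U|.+1 ^ #|V| * n ^ (#|V| - m)))).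
  rewrite [X in _ <= X](bigID (fun W : {set V} => m <= #|W|)) /=.
  apply: leq_trans (leq_addr _ _); apply: leq_sum => W mW.
  rewrite card_fam; apply: leq_mul.
    apply: (@leq_trans (#|U|.+1 ^ #|W|)); first by case: #|W| => // k; rewrite leq_exp2r.
    by apply: leq_pexp2l => //; apply: max_card.
  by apply: leq_pexp2l => //; apply: leq_sub2l.
by rewrite sum_nat_const card_setV.
Qed.
End Bound.


Section Ana.
Local Open Scope R_scope.

Lemma Rpower_pos x y : 0 < Rpower x y.
Proof. unfold Rpower; apply exp_pos. Qed.

Lemma lo_gen (g : nat -> nat) (D : nat -> R) (C c0 a : R) (b M N0 : nat) :
  0 < c0 -> 0 < a -> INR b < INR M * a -> 0 <= C ->
  (forall n, (N0 <= n)%N -> INR (g n) <= C * INR n ^ b) ->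
  (forall n, (N0 <= n)%N -> c0 * INR n ^ M <= D n) ->
  little_o (fun n => INR (g n)) (fun n => Rpower (D n) a).
Proof.
intros c0p ap bM Cp Hg HD eps epsp.
set gam := INR M * a - INR b.
have gp : 0 < gam by unfold gam; lra.
set P := Rpower c0 a.
have Pp : 0 < P by apply Rpower_pos.
set K := C / (eps * P) + 1.
have Kp : 0 < K.
  unfold K; have : 0 <= C / (eps * P).
    apply Rmult_le_pos; [lra | apply Rlt_le, Rinv_0_lt_compat, Rmult_lt_0_compat; lra].
  lra.
set T := Rpower K (/ gam).
have Tp : 0 < T by apply Rpower_pos.
destruct (INR_unbounded T) as [N1 HN1].
exists (maxn (maxn N0 N1) 1) => n Hn.
have n0 : (N0 <= n)%N by lia.
have n1 : (N1 <= n)%N by lia.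
have nn1 : (1 <= n)%N by lia.
set x := INR n.
have xT : T <= x.
  unfold x; apply Rle_trans with (INR N1); [lra | apply le_INR; apply/ssrnat.leP; exact n1].
have xp : 0 < x by lra.
rewrite Rabs_pos_eq; last by apply pos_INR.
rewrite (Rabs_pos_eq (Rpower _ _)); last by apply Rlt_le, Rpower_pos.
apply Rle_trans with (C * x ^ b); first by apply Hg.
have Dn : c0 * x ^ M <= D n by apply HD.
have hcx : 0 < c0 * x ^ M by apply Rmult_lt_0_compat; [lra | apply pow_lt; lra].
have H1 : Rpower (c0 * x ^ M) a <= Rpower (D n) a.
  apply Rle_Rpower_l; lra.
have H2 : Rpower (c0 * x ^ M) a = P * (x ^ b * Rpower x gam).
  rewrite -Rpower_mult_distr; [| lra | apply pow_lt; lra].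
  rewrite -(Rpower_pow M x xp) Rpower_mult -(Rpower_pow b x xp) -Rpower_plus.
  unfold P, gam; do 2 f_equal; ring.
have H3 : K <= Rpower x gam.
  have -> : K = Rpower T gam.
    unfold T; rewrite Rpower_mult Rinv_l; [| lra]; rewrite Rpower_1; lra.
  apply Rle_Rpower_l; lra.
have xb : 0 <= x ^ b by apply pow_le; lra.
have H4 : C <= eps * P * K.
  unfold K; rewrite Rmult_plus_distr_l Rmult_1_r.
  have -> : eps * P * (C / (eps * P)) = C.
    field; split; lra.
  have : 0 < eps * P by apply Rmult_lt_0_compat; lra.
  lra.
apply Rle_trans with (eps * Rpower (c0 * x ^ M) a); last first.
  apply Rmult_le_compat_l; lra.
rewrite H2.
apply Rle_trans with (eps * P * K * x ^ b).
  apply Rmult_le_compat_r; lra.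
have : eps * P * K * x ^ b <= eps * P * (x ^ b * Rpower x gam).
  have -> : eps * P * K * x ^ b = (eps * P * x ^ b) * K by ring.
  have -> : eps * P * (x ^ b * Rpower x gam) = (eps * P * x ^ b) * Rpower x gam by ring.
  apply Rmult_le_compat_l; [| lra].
  apply Rmult_le_pos; [apply Rmult_le_pos|]; lra.
lra.
Qed.
End Ana.


Section Parts.
Variables (V : finType) (E : {set {set V}}).
Hypothesis G : is_graph E.
Hypothesis B : strictly_2_balanced E.

Lemma card_copy n (f : {ffun V -> 'I_n}) : injective f ->
  #|[set f @: e | e : {set V} in E]| = #|E|.
Proof. by move=> fi; rewrite card_imset //; apply: imset_inj. Qed.

Lemma cover_card_le n (S : {set {set 'I_n}}) : S \subset Kedges n -> #|cover S| <= 2 * #|S|.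
Proof.
move=> sS; apply: leq_trans (leq_card_cover S).1 _.
rewrite mulnC -sum_nat_const; apply: leq_sum => y yS.
by move/subsetP: sS => /(_ y yS); rewrite inE => /eqP ->.
Qed.

Lemma in_cover (T : finType) (P : {set {set T}}) (A : {set T}) x :
  A \in P -> x \in A -> x \in cover P.
Proof. by move=> AP xA; apply/bigcupP; exists A. Qed.

Lemma pre_ge n (f : {ffun V -> 'I_n}) (U : {set 'I_n}) :
  U \subset [set f w | w in V] -> #|U| <= #|[set w | f w \in U]|.
Proof.
move=> sU; apply: leq_trans (leq_imset_card f _).
apply: subset_leq_card; apply/subsetP => y yU.
move/subsetP: sU => /(_ y yU) /imsetP [w _ yw].
by apply/imsetP; exists w => //; rewrite inE -yw.
Qed.

Lemma ar_beta (h k l c : nat) : 2 < h -> 2 < k -> 2 <= l -> l <= k - 1 -> 2 < c -> c <= h ->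
  (l - 1) * (h - 2) < (k - 1) * (c - 2) -> (h - c) * (k - 1) < (h - 2) * (k - l).
Proof. nia. Qed.

Definition beta l := \max_(D : {set {set V}} | (D \subset E) && (#|D| == l)) (#|V| - #|cover D|).

Lemma beta_le l : beta l <= #|V|.
Proof. by apply/bigmax_leqP => D _; apply: leq_subr. Qed.

Lemma beta_ineq l : 2 <= l -> l <= #|E| - 1 ->
  beta l * (#|E| - 1) < (#|V| - 2) * (#|E| - l).
Proof.
move=> l2 lk; have hh := h3 G B; have kk := k3 B.
case: (posnP #|[pred D : {set {set V}} | (D \subset E) && (#|D| == l)]|) => [c0 | cp].
  have -> : beta l = 0.
    apply/eqP; rewrite -leqn0; apply/bigmax_leqP => D PD.
    by move: (card0_eq c0 D); rewrite !inE PD.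
  by rewrite mul0n muln_gt0; apply/andP; split; lia.
have [D0 /andP [sD /eqP cD] bE] := eq_bigmax_cond (fun D : {set {set V}} => #|V| - #|cover D|) cp.
have -> : beta l = #|V| - #|cover D0| by rewrite /beta; exact: bE.
have hW : forall e, e \in D0 -> e \subset cover D0.
  by move=> e eD; apply/subsetP => w we; apply: in_cover eD we.
have w3 : 3 <= #|cover D0| by apply: (cover_ge3 G sD) => //; lia.
have ne : (cover D0, D0) <> (setT, E) by case=> _ HE; move: cD; rewrite HE; lia.
have := apply_B G B sD hW w3 ne; rewrite cD => /(_ ltac:(lia)) H.
exact: (ar_beta hh kk l2 lk w3 (max_card _) H).
Qed.

Lemma ar_sub (a b c d : nat) : a - b <= d -> b <= c -> b <= a -> a - d <= c.
Proof. lia. Qed.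

Lemma maxdeg_bound l n : 0 < n ->
  GH_maxdeg E l n <= 2 ^ #|V| * ((2 * l).+1 ^ #|V| * n ^ beta l).
Proof.
move=> n0; apply/bigmax_leqP => S; rewrite inE => /andP [sS /eqP cS].
pose cp := fun f : {ffun V -> 'I_n} => [set f @: e | e : {set V} in E].
apply: (@leq_trans #|[set f : {ffun V -> 'I_n} | injectiveb f && (S \subset cp f)]|).
  apply: (leq_trans _ (leq_imset_card cp _)); apply: subset_leq_card.
  apply/subsetP => T; rewrite /GH_edges !inE => /andP [/existsP [f /andP [fi /eqP ->]] sT].
  by apply/imsetP; exists f => //; rewrite inE fi sT.
apply: (@leq_trans #|[set f : {ffun V -> 'I_n} | #|V| - beta l <= #|[set w | f w \in cover S]|]|).
  apply: subset_leq_card; apply/subsetP => f; rewrite !inE => /andP [/injectiveP fi sf].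
  pose D := [set e in E | f @: e \in S].
  have DS : [set f @: e | e : {set V} in D] = S.
    apply/setP => y; apply/imsetP/idP => [[e]|yS].
      by rewrite inE => /andP [_ ?] ->.
    have := subsetP sf y yS; case/imsetP => e eE ye.
    by exists e => //; rewrite inE eE -ye yS.
  have cD : #|D| = l by rewrite -cS -DS card_imset //; apply: imset_inj.
  have sDE : D \subset E by apply/subsetP => e; rewrite inE => /andP [].
  have Dle : #|V| - #|cover D| <= beta l.
    by rewrite /beta; apply: (@leq_bigmax_cond _ (fun D1 : {set {set V}} => (D1 \subset E) && (#|D1| == l)) (fun D1 : {set {set V}} => #|V| - #|cover D1|) D); rewrite /= sDE cD eqxx.
  have cov : #|cover D| <= #|[set w | f w \in cover S]|.
    apply: subset_leq_card; apply/subsetP => w /bigcupP [e eD we]; rewrite inE.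
    by apply: (@in_cover _ _ (f @: e)); [rewrite -DS; apply: imset_f | apply: imset_f].
  exact: (ar_sub Dle cov (max_card _)).
apply: (leq_trans (@count_pre V n (cover S) (#|V| - beta l) n0)).
rewrite subKn ?beta_le //; apply: leq_mul => //; apply: leq_mul => //.
have hh := h3 G B.
rewrite leq_exp2r; last by lia.
by rewrite ltnS -cS; apply: cover_card_le.
Qed.

Lemma gamma_bound n : 0 < n ->
  GH_Gamma E n <= 2 ^ #|V| * (5 ^ #|V| * n ^ (#|V| - 3)).
Proof.
move=> n0; apply/bigmax_leqP => [[x x']] /=; rewrite /Kedges !inE => /and3P [/eqP x2 /eqP x'2 nx].
have kk := k3 B; have hh := h3 G B.
pose cp := fun f : {ffun V -> 'I_n} => [set f @: e | e : {set V} in E].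
pose U := x :|: x'.
apply: (@leq_trans #|[set f : {ffun V -> 'I_n} | injectiveb f && (U \subset cover (cp f))]|).
  apply: (leq_trans _ (leq_imset_card (fun f => cp f :\ x) _)); apply: subset_leq_card.
  apply/subsetP => S; rewrite /GH_edges !inE => /and4P [sK /eqP cS /existsP [f /andP [fi /eqP ef]]
     /existsP [g /andP [gi /eqP eg]]].
  have xS : x \notin S.
    apply/negP => xS.
    have fi' : injective f by apply/injectiveP.
    have := card_copy fi'; rewrite -ef.
    have -> : S :|: [set x] = S by apply/setUidPl; rewrite sub1set.
    rewrite cS; case: #|E| kk => // k0 _ /= /eqP; by rewrite eqn_leq ltnn andbF.
  apply/imsetP; exists f; last by rewrite /cp -ef setUC setU1K.
  rewrite inE fi /=; apply/subsetP => y; rewrite inE => /orP [yx|yx'].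
    by apply: (@in_cover _ _ x) => //; rewrite /cp -ef !inE eqxx orbT.
  have : x' \in cp g by rewrite /cp -eg !inE eqxx orbT.
  case/imsetP => e' e'E x'e; move: yx'; rewrite x'e => /imsetP [w we' ->].
  have [e'' e''E /andP [ne we'']] := deg2 G B e'E we'.
  have : g @: e'' \in S.
    have : g @: e'' \in cp g by apply: imset_f.
    rewrite /cp -eg !inE => /orP [//|/eqP ge].
    have gi' : injective g by apply/injectiveP.
    by move: ne; rewrite -(imset_inj gi' (etrans ge x'e)) eqxx.
  move=> gS; apply: (@in_cover _ _ (g @: e'')); last by apply: imset_f.
  by rewrite /cp -ef !inE gS.
apply: (@leq_trans #|[set f : {ffun V -> 'I_n} | 3 <= #|[set w | f w \in U]|]|).
  apply: subset_leq_card; apply/subsetP => f; rewrite !inE => /andP [fi sU].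
  apply: leq_trans (pre_ge _).
    by have /andP [] := two_sets_union x2 x'2 nx.
  apply/subsetP => y /(subsetP sU) /bigcupP [z /imsetP [e _ ->] /imsetP [w _ ->]].
  by apply: imset_f.
apply: (leq_trans (@count_pre V n U 3 n0)).
apply: leq_mul => //; apply: leq_mul => //.
rewrite leq_exp2r; last by lia.
by have /andP [] := two_sets_union x2 x'2 nx.
Qed.
End Parts.


Lemma INR_muln a b : INR (a * b)%N = Rmult (INR a) (INR b).
Proof. exact: mult_INR. Qed.

Lemma INR_expn a b : INR (a ^ b)%N = pow (INR a) b.
Proof.
elim: b => [|b IH]; first by rewrite expn0.
by rewrite expnS INR_muln IH /=.
Qed.

Lemma expn_mono a b e : a <= b -> a ^ e <= b ^ e.
Proof. by move=> ab; elim: e => [|e IH]; rewrite ?expn0 // !expnS leq_mul. Qed.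

Lemma ffact_lb n m : (n - m) ^ m <= n ^_ m.
Proof.
elim: m => [|m IH]; first by rewrite ffactn0 expn0.
rewrite ffactnSr expnS mulnC; apply: leq_mul; last lia.
apply: leq_trans IH; apply: expn_mono; lia.
Qed.

Lemma ffact_lb2 n h : 2 <= h -> 2 * h <= n -> n ^ (h - 2) <= 2 ^ (h - 2) * (n - 2) ^_ (h - 2).
Proof.
move=> h2 hn.
apply: (@leq_trans ((2 * ((n - 2) - (h - 2))) ^ (h - 2))).
  by apply: expn_mono; lia.
by rewrite expnMn; apply: leq_mul => //; apply: ffact_lb.
Qed.

Lemma aut_pos (V : finType) (E : {set {set V}}) : 0 < aut_card E.
Proof.
rewrite /aut_card card_gt0; apply/set0Pn; exists (1%g : {perm V}); rewrite inE; apply/eqP.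
have H : forall e : {set V}, (1%g : {perm V}) @: e = e.
  by move=> e; rewrite -[RHS]imset_id; apply: eq_imset => w; rewrite perm1.
by rewrite (eq_imset _ H) imset_id.
Qed.

Section Real.
Local Open Scope R_scope.
Lemma Delta_lb (V : finType) (E : {set {set V}}) n : (2 <= #|V|)%N -> (0 < #|E|)%N -> (2 * #|V| <= n)%N ->
  / INR (2 ^ (#|V| - 2) * aut_card E)%N * INR n ^ (#|V| - 2) <= GH_Delta E n.
Proof.
move=> h2 k0 hn; rewrite /GH_Delta -INR_expn.
set M := (#|V| - 2)%N; set A := (2 ^ M * aut_card E)%N; set X := (n ^ M)%N.
set Cn := (2 * #|E| * (n - 2) ^_ M)%N.
have ap := aut_pos E.
have Ap : (0 < A)%N by rewrite /A muln_gt0 expn_gt0 ap.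
have nat1 : (X * aut_card E <= Cn * A)%N.
  rewrite /A mulnA [(Cn * _)%N]mulnC; apply: leq_mul => //.
  apply: (leq_trans (ffact_lb2 h2 hn)); rewrite -/M /Cn.
  by apply: leq_mul => //; apply: leq_pmull; rewrite muln_gt0 k0.
have R1 : (INR X * INR (aut_card E) <= INR Cn * INR A).
  by rewrite -!INR_muln; apply: le_INR; apply/ssrnat.leP.
have Ar : (0 < INR A) by apply: lt_0_INR; apply/ssrnat.ltP.
have ar : (0 < INR (aut_card E)) by apply: lt_0_INR; apply/ssrnat.ltP.
have eq1 : (/ INR A * INR X = (INR X * INR (aut_card E)) / (INR A * INR (aut_card E))).
  by field; split; lra.
have eq2 : (INR Cn / INR (aut_card E) = (INR Cn * INR A) / (INR A * INR (aut_card E))).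
  by field; split; lra.
rewrite eq1 eq2; apply: Rmult_le_compat_r => //.
by apply: Rlt_le; apply: Rinv_0_lt_compat; apply: Rmult_lt_0_compat.
Qed.
End Real.

End Helpers.
Import Helpers.


Theorem mainTheorem19 (V : finType) (E : {set {set V}}) :
  is_graph E -> strictly_2_balanced E ->
  (* (1) G^H is Delta-regular (for n >= h) *)
  (forall n : nat, #|V| <= n -> forall x : {set 'I_n}, x \in Kedges n ->
     INR (GH_deg E x) = GH_Delta E n) /\
  (* (2) Delta_l(G^H) = o(Delta^((k-l)/(k-1))) for 2 <= l <= k-1 *)
  (forall l : nat, 2 <= l <= #|E| - 1 ->
     little_o (fun n => INR (GH_maxdeg E l n))
              (fun n => Rpower (GH_Delta E n)
                               (Rdiv (INR (#|E| - l)) (INR (#|E| - 1))))) /\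
  (* (3) Gamma(G^H) = o(Delta) *)
  little_o (fun n => INR (GH_Gamma E n)) (fun n => GH_Delta E n).
Proof.
move=> G B.
have hh := h3 G B; have kk := k3 B; have ap := aut_pos E.
have apR : Rlt 0 (INR (aut_card E)) by apply: lt_0_INR; apply/ssrnat.ltP.
have c0p : Rlt 0 (Rinv (INR (2 ^ (#|V| - 2) * aut_card E))).
  by apply: Rinv_0_lt_compat; apply: lt_0_INR; apply/ssrnat.ltP; rewrite muln_gt0 expn_gt0 ap.
have HD : forall n, 2 * #|V| <= n ->
    Rle (Rmult (Rinv (INR (2 ^ (#|V| - 2) * aut_card E))) (pow (INR n) (#|V| - 2))) (GH_Delta E n).
  by move=> n hn; apply: Delta_lb => //; lia.
split.
  move=> n hn x; rewrite /Kedges inE => /eqP x2.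
  have H := deg_aut G (no_isolated G B) x2.
  have H' : GH_deg E x * aut_card E = 2 * #|E| * (n - 2) ^_ (#|V| - 2).
    by rewrite H mulnCA mulnA !subn2.
  rewrite /GH_Delta -H' mult_INR; field; lra.
split.
  move=> l /andP [l2 lk].
  apply: (@lo_gen _ _ (INR (2 ^ #|V| * ((2 * l).+1 ^ #|V|))) _ _ (beta E l) (#|V| - 2) (2 * #|V|) c0p).
  - apply: Rdiv_lt_0_compat; apply: lt_0_INR; apply/ssrnat.ltP; lia.
  - have bi := beta_ineq G B l2 lk.
    have k1 : Rlt 0 (INR (#|E| - 1)) by apply: lt_0_INR; apply/ssrnat.ltP; lia.
    apply: (Rmult_lt_reg_r (INR (#|E| - 1))) => //.
    have -> : Rmult (Rmult (INR (#|V| - 2)) (Rdiv (INR (#|E| - l)) (INR (#|E| - 1)))) (INR (#|E| - 1))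
              = INR ((#|V| - 2) * (#|E| - l)).
      rewrite mult_INR; field; lra.
    rewrite -mult_INR; apply: lt_INR; apply/ssrnat.ltP; exact: bi.
  - by apply: pos_INR.
  - move=> n hn; have n0 : 0 < n by lia.
    have := maxdeg_bound G B l n0 => /ssrnat.leP /le_INR.
    by rewrite !INR_muln !INR_expn Rmult_assoc.
  - exact: HD.
have L : little_o (fun n => INR (GH_Gamma E n)) (fun n => Rpower (GH_Delta E n) 1).
  apply: (@lo_gen _ _ (INR (2 ^ #|V| * 5 ^ #|V|)) _ _ (#|V| - 3) (#|V| - 2) (2 * #|V|) c0p).
  - lra.
  - rewrite Rmult_1_r; apply: lt_INR; apply/ssrnat.ltP; lia.
  - by apply: pos_INR.
  - move=> n hn; have n0 : 0 < n by lia.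
    have := gamma_bound G B n0 => /ssrnat.leP /le_INR.
    by rewrite !INR_muln !INR_expn Rmult_assoc.
  - exact: HD.
move=> eps ep; have [N HN] := L eps ep.
exists (maxn N (2 * #|V|)) => n hn.
have Dp : Rlt 0 (GH_Delta E n).
  apply: Rlt_le_trans (HD n ltac:(lia)).
  apply: Rmult_lt_0_compat => //; apply: pow_lt; apply: lt_0_INR; apply/ssrnat.ltP; lia.
by have := HN n ltac:(lia); rewrite /= Rpower_1.
Qed.
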